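(* Let $n\geq1$ and let $e\in\mathbf{I}_n(\geq,\geq,-)$ have parameters $(p,q)$. Then there are exactly $p+q$ sequences $f\in\mathbf{I}_{n+1}(\geq,\geq,-)$ whose first $n$ entries form $e$; these are $f=(e_1,\ldots,e_n,b)$ with $\beta(e)<b\leq n$, and, as $b$ runs from $\beta(e)+1$ to $n$, their parameters are respectively $$(p-1,q+1),(p-2,q+1),\ldots,(0,q+1),\ (p+1,q),(p+2,q-1),\ldots,(p+q,1).$$
   Context: $\mathbf{I}_n$ is the set of inversion sequences $e=(e_1,\ldots,e_n)$ with $0\leq e_i<i$. $\mathbf{I}_n(\geq,\geq,-)$ is the set of $e\in\mathbf{I}_n$ with no indices $i<j<k$ such that $e_i\geq e_j\geq e_k$. An entry $e_i$ is a left-to-right maximum if $e_i>e_j$ for all $j<i$. Let $\alpha(e)=\max\{e_1,\ldots,e_n\}$ and let $\beta(e)$ be the largest element of $\{e_i: e_i \text{ is not a left-to-right maximum}\}\cup\{-1\}$. The parameters of $e\in\mathbf{I}_n(\geq,\geq,-)$ are $(p,q)$ with $p=\alpha(e)-\beta(e)$ and $q=n-\alpha(e)$. (When $p=0$ the first list is empty.) *)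

(* Defs.v *)
(* Sequences are 0-indexed: e = [:: e_1; ...; e_n], nth 0 e i = e_{i+1}. *)
From mathcomp Require Import all_boot all_order all_algebra.
Set Implicit Arguments. Unset Strict Implicit. Unset Printing Implicit Defensive.
Import Order.TTheory GRing.Theory Num.Theory.

(* e is an inversion sequence: 0 <= e_i < i (1-indexed), i.e. nth 0 e i <= i (0-indexed) *)
Definition is_inv_seq (e : seq nat) : bool :=
  all (fun i => nth 0 e i <= i) (iota 0 (size e)).

Definition avoids_gege (e : seq nat) : bool :=
  [forall i : 'I_(size e), forall j : 'I_(size e), forall k : 'I_(size e),
     ((i < j) && (j < k)) ==>
     ~~ ((nth 0 e j <= nth 0 e i) && (nth 0 e k <= nth 0 e j))].

Definition in_I_gege (n : nat) (e : seq nat) : bool :=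
  [&& size e == n, is_inv_seq e & avoids_gege e].

Definition is_ltr_max (e : seq nat) (i : nat) : bool :=
  all (fun j => nth 0 e j < nth 0 e i) (iota 0 i).

Local Open Scope nat_scope.
Definition alpha (e : seq nat) : nat := \max_(x <- e) x.


Local Open Scope ring_scope.
Definition beta (e : seq nat) : int :=
  \big[Num.max/(-1)%R]_(i <- iota 0 (size e) | ~~ is_ltr_max e i) (nth 0%N e i)%:Z.

Definition params (e : seq nat) : int * int :=
  ((alpha e)%:Z - beta e, (size e)%:Z - (alpha e)%:Z)%R.

(* Main.v *)
Require Import Defs.
From mathcomp Require Import all_boot all_order all_algebra.
From mathcomp Require Import zify.
Import Order.TTheory GRing.Theory Num.Theory.
Local Open Scope ring_scope.

Lemma nthr_last (e : seq nat) b : nth 0%N (rcons e b) (size e) = b.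
Proof. by rewrite nth_rcons ltnn eqxx. Qed.
Lemma nthr_lt (e : seq nat) b i : (i < size e)%N -> nth 0%N (rcons e b) i = nth 0%N e i.
Proof. by move=> h; rewrite nth_rcons h. Qed.

Lemma ltrP (e : seq nat) i :
  reflect (forall j, (j < i)%N -> (nth 0 e j < nth 0 e i)%N) (is_ltr_max e i).
Proof.
apply: (iffP allP) => H j.
  by move=> ji; apply: H; rewrite mem_iota.
by rewrite mem_iota /= => ji; apply: H.
Qed.

Lemma ltr_rcons (e : seq nat) b i : (i < size e)%N ->
  is_ltr_max (rcons e b) i = is_ltr_max e i.
Proof.
move=> ie; apply/ltrP/ltrP => H j ji; have := H j ji;
  by rewrite !nthr_lt // (ltn_trans ji ie).
Qed.

Lemma nth_le_alpha (e : seq nat) j : (j < size e)%N -> (nth 0 e j <= alpha e)%N.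
Proof. by move=> js; apply: leq_bigmax_seq => //; apply: mem_nth. Qed.

Lemma ltr_last (e : seq nat) b : (0 < size e)%N ->
  is_ltr_max (rcons e b) (size e) = (alpha e < b)%N.
Proof.
move=> s0; apply/ltrP/idP => H.
  case: b H => [|b] H.
    by have := H 0%N s0; rewrite nthr_last.
  rewrite ltnS; apply/bigmax_leqP_seq => x /(nthP 0) [j js <-] _.
  by have := H j js; rewrite nthr_last nthr_lt.
move=> j js; rewrite nthr_last nthr_lt //.
exact: leq_ltn_trans (@nth_le_alpha e j js) H.
Qed.

Lemma alpha_rcons (e : seq nat) b : alpha (rcons e b) = maxn (alpha e) b.
Proof. by rewrite /alpha big_rcons. Qed.

Lemma alpha_lt (e : seq nat) : is_inv_seq e -> (0 < size e)%N -> (alpha e < size e)%N.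
Proof.
move=> /allP inv s0; rewrite -(prednK s0) ltnS; apply/bigmax_leqP_seq => x /(nthP 0) [j js <-] _.
have := inv j; rewrite mem_iota /= => /(_ js) h.
by rewrite -ltnS prednK //; apply: leq_ltn_trans h js.
Qed.

Lemma bigmax_lt_iff (s : seq nat) (P : pred nat) (F : nat -> int) (x : int) :
  (\big[Num.max/(-1)]_(i <- s | P i) F i < x) = (-1 < x) && all (fun i => P i ==> (F i < x)) s.
Proof.
elim: s => [|a s IH]; first by rewrite big_nil /= andbT.
rewrite big_cons /=; case: (P a) => /=; last by [].
by rewrite gt_max IH; case: (F a < x); case: (-1 < x); case: (all _ _).
Qed.

Lemma beta_lt (e : seq nat) (x : int) :
  (beta e < x) <-> (-1 < x) /\
     (forall j, (j < size e)%N -> ~~ is_ltr_max e j -> (nth 0 e j)%:Z < x).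
Proof.
rewrite /beta bigmax_lt_iff; split.
  move=> /andP[h /allP H]; split => // j js nl.
  by have := H j; rewrite mem_iota /= nl => /(_ js).
move=> [h H]; rewrite h /=; apply/allP => j; rewrite mem_iota /= => js.
by apply/implyP; apply: H.
Qed.

Lemma beta_ge (e : seq nat) : -1 <= beta e.
Proof. by rewrite leNgt; apply/negP => /beta_lt [] ; rewrite ltxx. Qed.

Lemma beta_le_alpha (e : seq nat) : beta e <= (alpha e)%:Z.
Proof.
rewrite -ltzD1 -PoszD addn1; apply/beta_lt; split => // j js _.
by rewrite ltz_nat ltnS (@nth_le_alpha e j js).
Qed.

Lemma bigmax_idx (s : seq nat) (P : pred nat) (F : nat -> int) (y z : int) :
  \big[Num.max/(Num.max y z)]_(i <- s | P i) F i = Num.max y (\big[Num.max/z]_(i <- s | P i) F i).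
Proof.
elim: s => [|a s IH]; first by rewrite !big_nil.
rewrite !big_cons; case: (P a) => //.
by rewrite IH maxCA.
Qed.

Lemma beta_rcons (e : seq nat) b :
  beta (rcons e b) = if is_ltr_max (rcons e b) (size e) then beta e
                     else Num.max (beta e) b%:Z.
Proof.
rewrite /beta size_rcons -addn1 iotaD add0n cats1 big_rcons_op /=.
have E : \big[Num.max/(-1)]_(i <- iota 0 (size e) | ~~ is_ltr_max (rcons e b) i) (nth 0%N (rcons e b) i)%:Z
   = \big[Num.max/(-1)]_(i <- iota 0 (size e) | ~~ is_ltr_max e i) (nth 0%N e i)%:Z.
  rewrite big_seq_cond [RHS]big_seq_cond; apply: eq_big => i.
    case: (boolP (i \in _)) => //=; rewrite mem_iota /= => ie.
    by rewrite ltr_rcons.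
  rewrite mem_iota /= => /andP[ie _].
  by rewrite nthr_lt.
case: (is_ltr_max _ _) => /=; first by rewrite -E.
rewrite bigmax_idx E nthr_last.
by rewrite maxC.
Qed.

Lemma avoidsP (e : seq nat) :
  reflect (forall i j k, (i < j)%N -> (j < k)%N -> (k < size e)%N ->
             ~~ ((nth 0 e j <= nth 0 e i)%N && (nth 0 e k <= nth 0 e j)%N))
          (avoids_gege e).
Proof.
apply: (iffP forallP) => H.
  move=> i j k ij jk ks.
  have := H (Ordinal (ltn_trans ij (ltn_trans jk ks))).
  move=> /forallP /(_ (Ordinal (ltn_trans jk ks))) /forallP /(_ (Ordinal ks)) /implyP.
  by apply; rewrite /= ij jk.
move=> i; apply/forallP => j; apply/forallP => k; apply/implyP => /andP[ij jk].
exact: H ij jk (ltn_ord k).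
Qed.

Lemma inv_rcons (e : seq nat) b : is_inv_seq (rcons e b) = is_inv_seq e && (b <= size e)%N.
Proof.
rewrite /is_inv_seq size_rcons -addn1 iotaD all_cat /= add0n nthr_last andbT.
congr andb; apply: eq_in_all => i; rewrite mem_iota /= => ie.
by rewrite nthr_lt.
Qed.

Lemma avoid_rcons (e : seq nat) b :
  avoids_gege (rcons e b) = avoids_gege e && (beta e < b%:Z).
Proof.
apply/idP/andP.
  move/avoidsP => H; split.
    apply/avoidsP => i j k ij jk ks.
    have := H i j k ij jk; rewrite size_rcons ltnS (ltnW ks) => /(_ isT).
    by rewrite !nthr_lt // ?(ltn_trans jk ks) // (ltn_trans ij (ltn_trans jk ks)).
  apply/beta_lt; split => // j js.
  rewrite -has_predC => /hasP [i]; rewrite mem_iota /= => ij; rewrite -leqNgt => ji.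
  have := H i j (size e) ij js; rewrite size_rcons ltnSn => /(_ isT).
  rewrite nthr_last !nthr_lt // ?(ltn_trans ij js) // ji /= -ltnNge => h.
  by rewrite ltz_nat.
move=> [/avoidsP av /beta_lt [_ bl]]; apply/avoidsP => i j k ij jk.
rewrite size_rcons ltnS leq_eqVlt => /orP [/eqP ke | ks].
  subst k; rewrite nthr_last !nthr_lt // ?(ltn_trans ij jk) //.
  apply/negP => /andP [ji bj].
  have nl : ~~ is_ltr_max e j.
    by apply/negP => /ltrP /(_ i ij); rewrite ltnNge ji.
  by have := bl j jk nl; rewrite ltz_nat ltnNge bj.
have := av i j k ij jk ks.
by rewrite !nthr_lt // ?(ltn_trans jk ks) // (ltn_trans ij (ltn_trans jk ks)).
Qed.

Lemma card_ge k m : #|[set b : 'I_k | (m <= b)%N]| = (k - m)%N.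
Proof.
rewrite cardsE cardE /enum_mem size_filter -enumT.
have -> : count (mem (fun b : 'I_k => (m <= b)%N)) (enum 'I_k) = count (leq m) (map val (enum 'I_k)).
  by rewrite count_map.
rewrite val_enum_ord.
case: (leqP m k) => mk.
  rewrite -(subnKC mk) iotaD count_cat add0n.
  rewrite (eq_in_count (a2 := pred0)); last first.
    by move=> x; rewrite mem_iota /= => xm; apply/negbTE; rewrite -ltnNge.
  rewrite count_pred0 add0n (eq_in_count (a2 := predT)); last by move=> x; rewrite mem_iota /= => /andP[].
  by rewrite count_predT size_iota addKn.
rewrite (eq_in_count (a2 := pred0)); last first.
  by move=> x; rewrite mem_iota /= => xk; apply/negbTE; rewrite -ltnNge (ltn_trans xk mk).
by rewrite count_pred0; apply/esym/eqP; rewrite subn_eq0 ltnW.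
Qed.

Theorem lemma2p2 (n : nat) (e : seq nat) (p q : int) :
  (1 <= n)%N -> in_I_gege n e -> params e = (p, q) ->
  (* the extensions f = e ++ [b] lying in I_{n+1}(>=,>=,-) are exactly those with beta(e) < b <= n *)
  (forall b : nat, in_I_gege n.+1 (rcons e b) = (beta e < b%:Z) && (b <= n)%N) /\
  (* there are exactly p + q of them (every f in I_{n+1} has last entry < n+1) *)
  (#|[set b : 'I_n.+1 | in_I_gege n.+1 (rcons e b)]|%:Z = p + q) /\
  (* parameters for beta(e) < b <= alpha(e): (p - (b - beta), q + 1) *)
  (forall b : nat, beta e < b%:Z -> (b <= alpha e)%N ->
     params (rcons e b) = (p - (b%:Z - beta e), q + 1)) /\
  (* parameters for alpha(e) < b <= n: (p + (b - alpha), q - (b - alpha) + 1) *)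
  (forall b : nat, (alpha e < b)%N -> (b <= n)%N ->
     params (rcons e b) = (p + (b%:Z - (alpha e)%:Z), q - (b%:Z - (alpha e)%:Z) + 1)).
Proof.
move=> n1 /and3P [/eqP sz inv av]; rewrite /params => -[<- <-]; subst n.
have P1 : forall b : nat, in_I_gege (size e).+1 (rcons e b) = (beta e < b%:Z) && (b <= size e)%N.
  by move=> b; rewrite /in_I_gege size_rcons eqxx inv_rcons avoid_rcons inv av /= andbC.
have al := @alpha_lt e inv n1.
have bg := beta_ge e; have ba := beta_le_alpha e.
split => //; split; last split.
- set m := absz (beta e + 1).
  have mE : (m%:Z = beta e + 1)%R.
    rewrite /m gez0_abs //; lia.
  have -> : [set b : 'I_(size e).+1 | in_I_gege (size e).+1 (rcons e b)] = [set b : 'I_(size e).+1 | (m <= b)%N].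
    apply/setP => b; rewrite !inE P1; have := ltn_ord b; rewrite ltnS => ->; rewrite andbT -lez_nat mE; lia.
  rewrite card_ge.
  have : (m <= size e)%N.
    rewrite -lez_nat mE; move: ba; rewrite -ltz_nat in al; lia.
  lia.
- move=> b bb ba'; rewrite size_rcons alpha_rcons beta_rcons ltr_last //.
  rewrite ltnNge ba' /= (maxn_idPl ba') (max_idPr (ltW bb)).
  congr pair; lia.
- move=> b ab bn; rewrite size_rcons alpha_rcons beta_rcons ltr_last // ab /=.
  rewrite (maxn_idPr (ltnW ab)).
  congr pair; lia.
Qed.
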